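(* Let $P$ be a finite poset and let $\varphi: P\to P$ be a map such that $\varphi\circ\varphi=\mathrm{id}_P$ and, for all $x,y\in P$, $x\le y \iff \varphi(x)\le\varphi(y)$. (i) If $\varphi$ has no fixed points, then $P$ is a $\forall$-game. (ii) If the set of fixed points of $\varphi$ is nonempty and has a minimum element (a fixed point $z$ with $z\le w$ for every fixed point $w$), then $P$ is an $\exists$-game.
   Context: A finite poset $P$ defines a poset game: two players alternate moves; a move consists of choosing a point $x$ of the current poset $Q$ and replacing $Q$ by $Q_x:=\{y\in Q: x\not\le y\}$ (i.e., removing $x$ and every point above it); the first player unable to move (because the poset is empty) loses. $P$ is an $\exists$-game if the player who moves first has a winning strategy, and a $\forall$-game otherwise (i.e., the second player has a winning strategy). *)

(* Defs.v *)
From HB Require Import structures.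
From mathcomp Require Import all_boot all_order.
Set Implicit Arguments. Unset Strict Implicit. Unset Printing Implicit Defensive.
Import Order.Theory.
Local Open Scope order_scope.

Section PosetGame.
Variables (d : Order.disp_t) (T : finPOrderType d).

Definition move (Q : {set T}) (x : T) : {set T} := [set y in Q | ~~ (x <= y)].

(* winf n Q: the player to move in position Q wins, computed with fuel n;
   correct whenever n >= #|Q| (each move strictly decreases the size). *)
Fixpoint winf (n : nat) (Q : {set T}) : bool :=
  match n with
  | 0 => false
  | n'.+1 => [exists x in Q, ~~ winf n' (move Q x)]
  end.

Definition first_wins (Q : {set T}) : bool := winf #|Q| Q.

Definition exists_game : bool := first_wins [set: T].
Definition forall_game : bool := ~~ first_wins [set: T].
End PosetGame.

(* Main.v *)
Require Import Defs.
From HB Require Import structures.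
From mathcomp Require Import all_boot all_order.
Import Order.Theory.
Local Open Scope order_scope.
Set Implicit Arguments.

Section Aux.
Variables (d : Order.disp_t) (T : finPOrderType d) (phi : T -> T).
Hypothesis hinv : forall x, phi (phi x) = x.
Hypothesis hordb : forall x y : T, (x <= y) = (phi x <= phi y).

Lemma move_card (Q : {set T}) x : x \in Q -> (#|move Q x| < #|Q|)%N.
Proof.
move=> xQ; rewrite (cardsD1 x Q) xQ add1n ltnS; apply: subset_leq_card.
apply/subsetP => y; rewrite /move !inE => /andP[yQ nxy]; rewrite yQ andbT.
by apply: contraNneq nxy => ->.
Qed.

Lemma lphi x y : (x <= phi y) = (phi x <= y).
Proof. by rewrite hordb hinv. Qed.

Lemma key n (Q : {set T}) : (#|Q| <= n)%N ->
  (forall y, (y \in Q) = (phi y \in Q)) ->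
  (forall y, y \in Q -> phi y != y) -> ~~ winf n Q.
Proof.
elim/ltn_ind: n Q => n IH Q hc hcl hnf.
case: n IH hc => [|n] IH hc //=.
rewrite negb_exists; apply/forallP => x; rewrite negb_and negbK.
case xQ: (x \in Q) => //=.
set Q1 := move Q x.
have px : phi x \in Q1.
  rewrite /Q1 /move inE -hcl xQ /=.
  apply/negP => h; move: (hnf x xQ); rewrite eq_le h /=.
  by rewrite hordb hinv in h; rewrite h.
have hQ1 : (#|Q1| <= n)%N by have := leq_trans (move_card xQ) hc; rewrite ltnS.
case: n IH hc hQ1 => [|m] IH hc hQ1.
  by rewrite leqn0 cards_eq0 in hQ1; move/eqP: hQ1 => e; rewrite e inE in px.
rewrite /=; apply/existsP; exists (phi x); rewrite px /=.
apply: IH => //.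
- by have := leq_trans (move_card px) hQ1; rewrite ltnS.
- move=> y; rewrite /Q1 /move !inE -hcl.
  rewrite (hordb x (phi y)) hinv (hordb (phi x) (phi y)) hinv.
  by rewrite hinv andbAC.
- by move=> y; rewrite /Q1 /move !inE => /andP[/andP[yQ _] _]; apply: hnf.
Qed.
End Aux.

Theorem mainTheorem1 (d : Order.disp_t) (T : finPOrderType d) (phi : T -> T)
  (hinv : forall x, phi (phi x) = x)
  (hord : forall x y : T, (x <= y) <-> (phi x <= phi y)) :
  ((forall x, phi x <> x) -> forall_game T) /\
  ((exists z, phi z = z /\ (forall w, phi w = w -> z <= w)) -> exists_game T).
Proof.
have hordb : forall x y : T, (x <= y) = (phi x <= phi y).
  by move=> x y; apply/idP/idP; [exact: (proj1 (hord x y)) | exact: (proj2 (hord x y))].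
split.
  move=> hnf; rewrite /forall_game /first_wins.
  refine (@key _ _ phi hinv hordb #|[set: T]| [set: T] (leqnn _) _ _).
    by move=> y; rewrite !inE.
  by move=> y _; apply/eqP; apply: hnf.
case=> z [hz hmin]; rewrite /exists_game /first_wins.
have zT : z \in [set: T] by rewrite inE.
have hc := move_card zT.
case e: #|[set: T]| hc => [|m] hc //.
rewrite /=; apply/existsP; exists z; rewrite zT /=.
apply: (key phi hinv hordb) => //.
- by move=> y; rewrite /move !inE /= {1}hordb hz.
- move=> y; rewrite /move !inE => hy; apply/eqP => fy.
  by rewrite hmin in hy.
Qed.
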